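(* Let $V_1,V_2,\ldots$ be pairwise uncorrelated zero-mean random variables, all with the same variance $\sigma^2$, where $0<\sigma<\infty$, and let $T_n := \frac{1}{\sigma\sqrt n}\sum_{k=1}^n V_k$. Let $n_1<n_2<\cdots$ be natural numbers with $\lim_{m\to\infty} n_{m+1}/n_m = 1$. If $T_{n_1},T_{n_2},\ldots$ converges in law to a random variable $T$, then the whole sequence $T_1,T_2,\ldots$ converges in law to $T$. *)

(* Defs.v *)
From HB Require Import structures.
From mathcomp Require Import all_boot all_order all_algebra.
From mathcomp Require Import all_classical all_reals all_analysis.
Set Implicit Arguments. Unset Strict Implicit. Unset Printing Implicit Defensive.
Import Order.TTheory GRing.Theory Num.Theory.
Import numFieldNormedType.Exports.
Local Open Scope classical_set_scope.
Local Open Scope ring_scope.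

Definition distr_fun d (Om : measurableType d) (R : realType)
  (Q : probability Om R) (T : Om -> R) (x : R) : R :=
  fine (Q [set w | T w <= x]).

Definition cvg_in_law d (Om : measurableType d) d' (Om' : measurableType d')
  (R : realType) (P : probability Om R) (Q : probability Om' R)
  (X : nat -> Om -> R) (T : Om' -> R) : Prop :=
  forall x : R, {for x, continuous (distr_fun Q T)} ->
    (fun n => distr_fun P (X n) x) @ \oo --> distr_fun Q T x.

Definition norm_sum d (Om : measurableType d) (R : realType)
  (V : nat -> Om -> R) (sigma : R) (n : nat) : Om -> R :=
  fun w => (sigma * Num.sqrt (n%:R))^-1 * \sum_(1 <= k < n.+1) V k w.

(* Main.v *)
Require Import Defs.
From HB Require Import structures.
From mathcomp Require Import all_boot all_order all_algebra.
From mathcomp Require Import all_classical all_reals all_analysis.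
From mathcomp Require Import measurable_realfun ring lra.
Import Order.TTheory GRing.Theory Num.Theory.
Import numFieldNormedType.Exports.
Local Open Scope classical_set_scope.
Local Open Scope ring_scope.
Set Implicit Arguments. Unset Strict Implicit.
From mathcomp Require Import zify.
Lemma mono_cont_pt (R : realType) (F : R -> R) (y : R) :
  nondecreasing_fun F -> ~ discontinuity F y -> {for y, continuous F}.
Proof.
move=> ndF nd.
have cl : cvg (F x @[x --> y^'-]).
  apply: nondecreasing_at_left_is_cvgr.
    by near=> z => a b _ _ ab; exact: ndF.
  near=> z; exists (F y) => _ [s /= sz <-]; apply: ndF.
  by move: sz; rewrite in_itv/= => /andP[_ /ltW].
have cr : cvg (F x @[x --> y^'+]).
  apply: nondecreasing_at_right_is_cvgr.
    by near=> z => a b _ _ ab; exact: ndF.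
  near=> z; exists (F y) => _ [s /= sz <-]; apply: ndF.
  by move: sz; rewrite in_itv/= => /andP[/ltW].
have l1 : lim (F x @[x --> y^'-]) <= F y.
  apply: limr_le => //; near=> z; apply: ndF.
  by near: z; exact: nbhs_left_le.
have l2 : F y <= lim (F x @[x --> y^'+]).
  apply: limr_ge => //; near=> z; apply: ndF.
  by near: z; exact: nbhs_right_ge.
have e : lim (F x @[x --> y^'-]) = lim (F x @[x --> y^'+]).
  set L1 := lim _; set L2 := lim _.
  by have [//|ne] := eqVneq L1 L2; exfalso; apply: nd; split.
apply/left_right_continuousP; split.
  have -> : F y = lim (F x @[x --> y^'-]) by apply/le_anti; rewrite l1 e l2.
  exact: cl.
have -> : F y = lim (F x @[x --> y^'+]) by apply/le_anti; rewrite l2 -e l1.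
exact: cr.
Unshelve. all: by end_near. Qed.

Lemma exists_cont_pt (R : realType) (F : R -> R) (a b : R) :
  nondecreasing_fun F -> a < b ->
  exists y, [/\ a < y, y < b & {for y, continuous F}].
Proof.
move=> ndF ab.
have cD : countable [set x | (x \in `]a, b[) /\ discontinuity F x].
  by apply: discontinuity_countable => u v _ _; exact: ndF.
apply: contrapT => hne.
have sub : `]a, b[ `<=` [set x | (x \in `]a, b[) /\ discontinuity F x].
  move=> y yab; split; first by rewrite inE.
  apply: contrapT => dy; apply: hne; exists y.
  move: yab; rewrite /= in_itv/= => /andP[ay yb]; split => //.
  by apply: mono_cont_pt => // ?; exact: dy.
have cab : countable [set` `]a, b[] by exact: sub_countable (subset_card_le sub) cD.
have := countable_lebesgue_measure0 cab.
rewrite lebesgue_measure_itv/= lte_fin ab -EFinB => /eqP; rewrite eqe subr_eq0.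
by move=> /eqP ba; move: ab; rewrite ba ltxx.
Qed.
Section sums.
Variables (R : realType) (d : measure_display) (Om : measurableType d)
  (P : probability Om R) (V : nat -> {RV P >-> R}) (sigma : R).
Hypotheses (HL : forall k, (0 < k)%N -> (V k : Om -> R) \in Lfun P 2)
  (HE : forall k, (0 < k)%N -> ('E_P[V k] = 0)%E)
  (HV : forall k, (0 < k)%N -> ('V_P[V k] = (sigma ^+ 2)%:E)%E)
  (HC : forall i j, (0 < i)%N -> (0 < j)%N -> i != j -> (covariance P (V i) (V j) = 0)%E).

Definition W (p j : nat) : {RV P >-> R} := \sum_(p.+1 <= k < p.+1 + j) V k.

Lemma WS p j : (W p j.+1 : Om -> R) = (W p j : Om -> R) \+ (V (p.+1 + j) : Om -> R).
Proof.
by rewrite /W addnS big_nat_recr ?leq_addr //= mfunD.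
Qed.

Lemma W0 p : (W p 0 : Om -> R) = cst 0.
Proof. by apply/funext => w; rewrite /W addn0 mfun_sum big_geq. Qed.

Lemma W_props p j :
  [/\ (W p j : Om -> R) \in Lfun P 2, ('E_P[W p j] = 0)%E,
      ('V_P[W p j] = (j%:R * sigma ^+ 2)%:E)%E &
      forall i, (p.+1 + j <= i)%N -> (covariance P (W p j) (V i) = 0)%E].
Proof.
have Pfin : P setT \is a fin_num := fin_num_measure P _ measurableT.
elim: j => [|j [L E Va C]].
  rewrite W0; split.
  - exact: Lfun_cst.
  - by rewrite expectation_cst.
  - by rewrite variance_cst mul0r.
  - by move=> i _; rewrite covariance_cst_l.
have Lj : (V (p.+1 + j) : Om -> R) \in Lfun P 2 by apply: HL; rewrite addSn.
rewrite WS; split.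
- have p1 : (1 <= 2%:E :> \bar R)%E by rewrite lee_fin ler1n.
  exact: (Lfun_addr_closed P p1).2.
- rewrite expectationD ?Lfun_subset12 // E HE ?addSn // adde0 //.
- rewrite varianceD // Va HV ?addSn // C // mule0 adde0 -EFinD.
  by rewrite mulrSr mulrDl mul1r.
- move=> i hi; rewrite covarianceDl //; last by apply: HL; apply: leq_trans hi.
  rewrite C; last by apply: leq_trans hi; rewrite addnS.
  rewrite HC ?adde0 ?addSn //; first by apply: leq_trans hi.
  by rewrite neq_ltn -addnS hi.
Qed.
End sums.
Arguments W {R d Om P}.
Arguments W_props {R d Om P}.

Section meas.
Variables (R : realType) (d : measure_display) (Om : measurableType d)
  (P : probability Om R).

Lemma mset_le (f : Om -> R) y : measurable_fun setT f ->
  measurable [set w | f w <= y].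
Proof.
move=> mf; have := mf measurableT _ (measurable_itv `]-oo, y]).
rewrite setTI; congr measurable; apply/seteqP; split => w /=;
  by rewrite in_itv.
Qed.

Lemma mset_ge (f : Om -> R) y : measurable_fun setT f ->
  measurable [set w | y <= f w].
Proof.
move=> mf; have := mf measurableT _ (measurable_itv `[y, +oo[).
rewrite setTI; congr measurable; apply/seteqP; split => w /=;
  by rewrite in_itv/= andbT.
Qed.

Lemma pr_sub (A B C : set Om) : measurable A -> measurable B -> measurable C ->
  A `<=` B `|` C -> fine (P A) <= fine (P B) + fine (P C).
Proof.
move=> mA mB mC sub.
have h : (P A <= P B + P C)%E.
  apply: le_trans (measureU2 P mB mC).
  by apply: le_measure => //; rewrite inE //; exact: measurableU.
rewrite -lee_fin EFinD !fineK //; exact: fin_num_measure.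
Qed.

Lemma distr_fun_nd (T : Om -> R) : measurable_fun setT T ->
  nondecreasing_fun (distr_fun P T).
Proof.
move=> mT u v uv; rewrite /distr_fun; apply: fine_le;
  [apply: fin_num_measure; exact: mset_le..|].
apply: le_measure; rewrite ?inE; [exact: mset_le..|].
by move=> w /= h; exact: le_trans uv.
Qed.
End meas.
Lemma upper_arith (R : realType) (tn tp u e x dl th y : R) :
  1 <= u -> u - 1 <= th -> th * `|x + dl| <= dl -> x + 2 * dl <= y ->
  tn = tp / u + e -> `|e| < dl -> tn <= x -> tp <= y.
Proof.
move=> u1 uth thx xy htn he hx.
have u0 : 0 < u by apply: lt_le_trans u1.
have tpE : tp = u * (tn - e) by rewrite htn addrK mulrC divfK ?gt_eqF.
have e1 : - e < dl by move: he; rewrite ltr_norml => /andP[h _]; rewrite ltrNl.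
have h1 : u * (tn - e) <= u * (x + dl) by rewrite ler_pM2l //; lra.
have h2 : (u - 1) * (x + dl) <= th * `|x + dl|.
  apply: le_trans (ler_norm _) _; rewrite normrM ger0_norm ?subr_ge0 //.
  by apply: ler_wpM2r.
nra.
Qed.
Lemma lower_arith (R : realType) (tn tp u e x dl th y : R) :
  1 <= u -> u - 1 <= th -> th * `|y| <= dl -> y + 2 * dl <= x ->
  tn = tp / u + e -> `|e| < dl -> tp <= y -> tn <= x.
Proof.
move=> u1 uth thy yx htn he hy.
have u0 : 0 < u by apply: lt_le_trans u1.
have e1 : e < dl by move: he; rewrite ltr_norml => /andP[_ h].
have h1 : tp / u <= y / u by rewrite ler_pM2r ?invr_gt0.
have h2 : y / u <= y + th * `|y|.
  have -> : y / u = y - y * (u - 1) / u by field; rewrite gt_eqF.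
  rewrite lerD2l.
  have w0 : 0 <= (u - 1) / u by rewrite divr_ge0 ?subr_ge0 // ltW.
  have wth : (u - 1) / u <= th.
    apply: le_trans uth; rewrite ler_pdivrMr // ler_peMr // subr_ge0 //.
  have -> : y * (u - 1) / u = y * ((u - 1) / u) by rewrite mulrA.
  have ny : - y <= `|y| by rewrite -normrN ler_norm.
  have ay : 0 <= `|y| by [].
  apply: (@le_trans _ _ (`|y| * ((u - 1) / u))).
    by rewrite -mulNr; apply: ler_wpM2r.
  by rewrite mulrC; apply: ler_wpM2r.
lra.
Qed.

Lemma u_bound (R : realType) (sp sn p n q : R) :
  0 < sp -> sp <= sn -> sp ^+ 2 = p -> sn ^+ 2 = n -> n <= q ->
  sn / sp - 1 <= q / p - 1.
Proof.
move=> sp0 spn hp hn nq.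
have p0 : 0 < p by rewrite -hp exprn_gt0.
rewrite lerD2r.
have u1 : 1 <= sn / sp by rewrite ler_pdivlMr // mul1r.
apply: (@le_trans _ _ ((sn / sp) ^+ 2)).
  by rewrite expr2 ler_peMl // (le_trans ler01).
by rewrite expr_div_n hp hn ler_pM2r // invr_gt0.
Qed.
Lemma nm_idx (nm : nat -> nat) : (forall m, (nm m < nm m.+1)%N) ->
  forall M n, (nm M <= n)%N ->
  exists m, [/\ (M <= m)%N, (nm m <= n)%N & (n < nm m.+1)%N].
Proof.
move=> inc M n hn.
have ge : forall i, (i <= nm i)%N.
  elim=> [//|i IH]; exact: leq_ltn_trans IH (inc i).
suff H : forall k n, (nm M <= n)%N -> (n < nm (M + k))%N ->
    exists m, [/\ (M <= m)%N, (nm m <= n)%N & (n < nm m.+1)%N].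
  apply: (H n.+1) => //; apply: leq_trans (ge _); lia.
elim=> [|k IH] n' h1 h2; first by rewrite addn0 in h2; lia.
have [lt|ge'] := ltnP n' (nm (M + k)); first exact: IH.
by exists (M + k); split => //; [exact: leq_addr | rewrite -addnS].
Qed.

Lemma cheb_arith (R : realType) (sig dl sn p n q : R) :
  0 < sig -> 0 < dl -> 0 < p -> p <= n -> n <= q -> 0 < sn -> sn ^+ 2 = n ->
  (dl * sig * sn) ^- 2 * ((n - p) * sig ^+ 2) <= (q / p - 1) / dl ^+ 2.
Proof.
move=> s0 d0 p0 pn nq sn0 hn.
have n0 : 0 < n by apply: lt_le_trans pn.
have -> : (dl * sig * sn) ^- 2 * ((n - p) * sig ^+ 2) = ((n - p) / n) / dl ^+ 2.
  rewrite -hn; field; rewrite ?mulf_neq0 ?gt_eqF //.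
rewrite ler_pM2r ?invr_gt0 ?exprn_gt0 //.
have -> : q / p - 1 = (q - p) / p by field; rewrite gt_eqF.
apply: (@le_trans _ _ ((n - p) / p)).
  rewrite ler_pdivrMr // mulrAC ler_pdivlMr // ler_wpM2l ?subr_ge0 //.
by rewrite ler_pM2r ?invr_gt0 // lerD2r.
Qed.

Lemma th_small (R : realType) (th a dl : R) :
  0 <= th -> 0 <= a -> th <= dl / (a + 1) -> th * a <= dl.
Proof.
move=> t0 a0 h.
have a1 : 0 < a + 1 by lra.
apply: (@le_trans _ _ (th * (a + 1))); first by rewrite ler_wpM2l // lerDl.
by rewrite -ler_pdivlMr.
Qed.

Section extra.
Variables (R : realType) (d : measure_display) (Om : measurableType d)
  (P : probability Om R) (V : nat -> {RV P >-> R}) (sigma : R).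

Lemma S_split p n w : (p <= n)%N ->
  \sum_(1 <= k < n.+1) V k w = \sum_(1 <= k < p.+1) V k w + W V p (n - p) w.
Proof.
move=> pn; rewrite /W mfun_sum addSn subnKC //.
by rewrite -big_cat_nat.
Qed.

Lemma norm_sum_mfun n : measurable_fun setT (norm_sum (fun k => V k : Om -> R) sigma n).
Proof.
rewrite /norm_sum.
apply: (@measurable_funM _ _ _ _ (cst _) (fun w => \sum_(1 <= k < n.+1) V k w)) => //.
by apply: measurable_sum => i; exact: measurable_funP.
Qed.

Lemma norm_sum_rel p n w : (0 < p)%N -> (p <= n)%N -> 0 < sigma ->
  norm_sum (fun k => V k : Om -> R) sigma n w =
  norm_sum (fun k => V k : Om -> R) sigma p w /
     (Num.sqrt n%:R / Num.sqrt p%:R) +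
  (sigma * Num.sqrt n%:R)^-1 * W V p (n - p) w.
Proof.
move=> p0 pn s0; rewrite /norm_sum (@S_split p n w pn).
have sp0 : 0 < Num.sqrt (p%:R : R) by rewrite sqrtr_gt0 ltr0n.
have sn0 : 0 < Num.sqrt (n%:R : R) by rewrite sqrtr_gt0 ltr0n; exact: leq_trans pn.
field; rewrite !gt_eqF //.
Qed.
End extra.

Unset Implicit Arguments. Set Strict Implicit.

Theorem lemma2p4 (R : realType) (d : measure_display) (Om : measurableType d)
  (P : probability Om R) (V : nat -> {RV P >-> R}) (sigma : R)
  (d' : measure_display) (Om' : measurableType d') (Q : probability Om' R)
  (T : {RV Q >-> R}) (nm : nat -> nat) :
  0 < sigma ->
  (forall k, (0 < k)%N -> (V k : Om -> R) \in Lfun P 2) ->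
  (forall k, (0 < k)%N -> ('E_P[V k] = 0)%E) ->
  (forall k, (0 < k)%N -> ('V_P[V k] = (sigma ^+ 2)%:E)%E) ->
  (forall i j, (0 < i)%N -> (0 < j)%N -> i != j -> (covariance P (V i) (V j) = 0)%E) ->
  (0 < nm 0)%N ->
  (forall m, (nm m < nm m.+1)%N) ->
  (fun m => (nm m.+1)%:R / (nm m)%:R : R) @ \oo --> (1 : R) ->
  cvg_in_law P Q (fun m => norm_sum (fun k => V k : Om -> R) sigma (nm m)) T ->
  cvg_in_law P Q (norm_sum (fun k => V k : Om -> R) sigma) T.
Proof.
move=> s0 HL HE HV HC nm0 inc ratio hsub x Fx.
set F := distr_fun Q T.
set TT := norm_sum (fun k => V k : Om -> R) sigma.
have mT : measurable_fun setT (T : Om' -> R) by exact: measurable_funP.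
have ndF : nondecreasing_fun F by exact: distr_fun_nd.
have nmpos : forall m, (0 < nm m)%N.
  by elim=> [//|m IH]; apply: leq_trans (inc m).
apply/cvgrPdist_le => eps eps0.
have [eta eta0 Heta] : exists2 eta, 0 < eta &
    forall y, `|x - y| < eta -> `|F x - F y| < eps / 2.
  move: Fx => /cvgrPdist_lt /(_ (eps / 2)) [|eta eta0 H]; first by lra.
  by exists eta => // y hy; apply: H.
set dl := eta / 4.
have dl0 : 0 < dl by rewrite /dl; lra.
have [yp [yp1 yp2 cyp]] : exists y, [/\ x + 2 * dl < y, y < x + 3 * dl & {for y, continuous F}].
  by apply: exists_cont_pt => //; lra.
have [ym [ym1 ym2 cym]] : exists y, [/\ x - 3 * dl < y, y < x - 2 * dl & {for y, continuous F}].
  by apply: exists_cont_pt => //; lra.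
have Fyp : `|F x - F yp| < eps / 2 by apply: Heta; rewrite /dl in yp1 yp2 *; rewrite ltr_norml; apply/andP; split; lra.
have Fym : `|F x - F ym| < eps / 2 by apply: Heta; rewrite /dl in ym1 ym2 *; rewrite ltr_norml; apply/andP; split; lra.
set th := Num.min (Num.min (dl / (`|x + dl| + 1)) (dl / (`|ym| + 1))) (eps * dl ^+ 2 / 4).
have th0 : 0 < th.
  rewrite /th !lt_min !divr_gt0 ?mulr_gt0 ?exprn_gt0 //; 
    by rewrite ?ltr_wpDl // ?ltr01 // normr_ge0.
have th1 : th * `|x + dl| <= dl.
  apply: th_small; [exact: ltW|by []|by rewrite /th !ge_min lexx].
have th2 : th * `|ym| <= dl.
  apply: th_small; [exact: ltW|by []|by rewrite /th !ge_min lexx !orbT].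
have th3 : th / dl ^+ 2 <= eps / 4.
  rewrite ler_pdivrMr ?exprn_gt0 //.
  have : th <= eps * dl ^+ 2 / 4 by rewrite /th !ge_min lexx !orbT.
  lra.
set G := fun n y => distr_fun P (TT n) y.
have [M1 HM1] : exists M, forall m, (M <= m)%N -> `|F yp - G (nm m) yp| < eps / 4.
  have := hsub yp cyp => /cvgrPdist_lt /(_ (eps / 4)) [|M _ H]; first by lra.
  by exists M => m hm; apply: H.
have [M2 HM2] : exists M, forall m, (M <= m)%N -> `|F ym - G (nm m) ym| < eps / 4.
  have := hsub ym cym => /cvgrPdist_lt /(_ (eps / 4)) [|M _ H]; first by lra.
  by exists M => m hm; apply: H.
have [M3 HM3] : exists M, forall m, (M <= m)%N ->
    (nm m.+1)%:R / (nm m)%:R - 1 <= th.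
  have := ratio => /cvgrPdist_lt /(_ th th0) [M _ H].
  exists M => m hm; have := H m hm; rewrite ltr_norml => /andP[h _]; lra.
exists (nm (maxn (maxn M1 M2) M3)) => // n /= hn.
have [m [hMm hpn hnq]] := @nm_idx nm inc _ _ hn.
have hm1 : (M1 <= m)%N by apply: leq_trans hMm; rewrite !leq_max leqnn.
have hm2 : (M2 <= m)%N by apply: leq_trans hMm; rewrite !leq_max leqnn !orbT.
have hm3 : (M3 <= m)%N by apply: leq_trans hMm; rewrite !leq_max leqnn !orbT.
have := HM1 m hm1; have := HM2 m hm2; have := HM3 m hm3.
move: hpn hnq; set p := nm m; set q := nm m.+1 => hpn hnq h3 h2 h1.
have p0 : (0 < p)%N := nmpos m.
have nq : (n <= q)%N by apply: ltnW.
have n0 : (0 < n)%N by apply: leq_trans hpn.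
set sp := Num.sqrt (p%:R : R); set sn := Num.sqrt (n%:R : R).
have sp0 : 0 < sp by rewrite sqrtr_gt0 ltr0n.
have sn0 : 0 < sn by rewrite sqrtr_gt0 ltr0n.
have spn : sp <= sn by rewrite /sp /sn ler_wsqrtr // ler_nat.
have sp2 : sp ^+ 2 = p%:R by rewrite sqr_sqrtr // ler0n.
have sn2 : sn ^+ 2 = n%:R by rewrite sqr_sqrtr // ler0n.
set u := sn / sp.
have u1 : 1 <= u by rewrite ler_pdivlMr // mul1r.
have uth : u - 1 <= th.
  apply: le_trans h3; apply: (u_bound sp0 spn sp2 sn2).
  by rewrite ler_nat.
set X := W V p (n - p).
have [XL XE XV _] := W_props V sigma HL HE HV HC p (n - p).
have mX : measurable_fun setT (X : Om -> R) by exact: measurable_funP.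
set C := [set w | dl * sigma * sn <= `|X w|].
have mC : measurable C.
  apply: (@mset_ge _ _ _ (fun w => `|X w|)).
  exact: measurableT_comp (@normr_measurable R setT) mX.
have eps'0 : 0 < dl * sigma * sn by rewrite !mulr_gt0.
have hC : fine (P C) <= th / dl ^+ 2.
  have := chebyshev X eps'0.
  have -> : [set x | dl * sigma * sn <= `|X x - fine 'E_P[X]|] = C.
    by apply/seteqP; split => w /=; rewrite XE subr0.
  rewrite XV -EFinM => hc.
  have hc' : fine (P C) <= (dl * sigma * sn) ^- 2 * ((n - p)%:R * sigma ^+ 2).
    by rewrite -lee_fin fineK //; exact: fin_num_measure.
  apply: le_trans hc' _; rewrite natrB //.
  apply: le_trans (@cheb_arith _ _ _ _ _ _ (q%:R) s0 dl0 _ _ _ sn0 sn2) _.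
  - by rewrite ltr0n.
  - by rewrite ler_nat.
  - by rewrite ler_nat.
  - by rewrite ler_pM2r ?invr_gt0 ?exprn_gt0.
have hrel : forall w, TT n w = TT p w / u + (sigma * sn)^-1 * X w.
  by move=> w; apply: norm_sum_rel.
have he : forall w, ~ C w -> `|(sigma * sn)^-1 * X w| < dl.
  move=> w /negP; rewrite /C /= -ltNge => hw.
  rewrite normrM gtr0_norm ?invr_gt0 ?mulr_gt0 // mulrC ltr_pdivrMr ?mulr_gt0 //.
  by rewrite mulrA.
have mTT : forall k y, measurable [set w | TT k w <= y].
  by move=> k y; apply: mset_le; exact: norm_sum_mfun.
have up : G n x <= G p yp + fine (P C).
  apply: pr_sub => //.
  move=> w /= hw; have [hc|hc] := pselect (C w); [by right|left].
  exact: (upper_arith u1 uth th1 (ltW yp1) (hrel w) (he w hc) hw).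
have lo : G p ym <= G n x + fine (P C).
  apply: pr_sub => //.
  move=> w /= hw; have [hc|hc] := pselect (C w); [by right|left].
  apply: (lower_arith u1 uth th2 _ (hrel w) (he w hc) hw); lra.
move: Fyp Fym h1 h2; rewrite !ltr_norml => /andP[? ?] /andP[? ?] /andP[? ?] /andP[? ?].
change (distr_fun P (TT n) x) with (G n x).
rewrite ler_norml; apply/andP; split; lra.
Qed.
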